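(* Let $C_n(a,b)$ be a connected $2$-regular circulant digraph, let $l\ge1$, $0\le k\le l$ with $la+k(b-a)=\omega n$ for a positive integer $\omega$, and let $Q$ be the set of positive divisors of $\gcd(l,k)$ that are coprime with $\omega$. Then $\varphi$ maps $\bigcup_{q\in Q}\mathbb{L}_2^q(l,k)\times\mathbb{Z}_n$ into $\mathcal{P}_{l,k}(C_n(a,b))$, and this map is surjective.
   Context: Let $n\ge 2$ and $0<a<b<n$ be integers with $\gcd(n,a,b)=1$. $C_n(a,b)$ has vertex set $\mathbb{Z}_n$ and directed bonds $(v,v+a)$, $(v,v+b)$ (addition mod $n$), with step sizes $a$, $b$. A path of length $l$ is a sequence of bonds $(e_1,\dots,e_l)$ with the terminus of $e_j$ equal to the origin of $e_{j+1}$; its $b$-count is the number of bonds of step size $b$; its step sequence is the sequence of step sizes; a circuit is a path whose last terminus equals its first origin. A periodic orbit is an equivalence class of circuits under cyclic rotation; it is primitive if it is not $[c_0^r]$ for a circuit $c_0$ and $r>1$ ($c_0^r$ = concatenation of $r$ copies). $\mathcal{P}_{l,k}(C_n(a,b))$ is the set of primitive periodic orbits of length $l$ and $b$-count $k$. Words over $\{a,b\}$ are ordered lexicographically with $a\prec b$; a word is Lyndon if strictly smaller than all its nontrivial cyclic rotations; $\mathbb{L}_2(l,k)$ is the set of Lyndon words of length $l$ with exactly $k$ letters $b$, and for $q\mid\gcd(l,k)$, $\mathbb{L}_2^q(l,k)=\{x^q: x\in\mathbb{L}_2(l/q,k/q)\}$. Identifying letters $a,b$ with step sizes $a,b$, $\psi(w,v)$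 is the unique path starting at vertex $v$ with step sequence $w$; when it is a circuit, $\varphi(w,v)=[\psi(w,v)]$. *)

(* Defs.v *)
From mathcomp Require Import all_boot.
Set Implicit Arguments. Unset Strict Implicit. Unset Printing Implicit Defensive.

(* Words over {a,b}: seq bool, with false = letter a, true = letter b (a < b). *)

Fixpoint lexlt (s t : seq bool) : bool :=
  match s, t with
  | [::], [::] => false
  | [::], _ :: _ => true
  | _ :: _, [::] => false
  | x :: s', y :: t' => (~~ x && y) || ((x == y) && lexlt s' t')
  end.

Definition lyndon (w : seq bool) : bool :=
  [forall i : 'I_(size w), (0 < i) ==> lexlt w (rot i w)].

Definition inL2 (l k : nat) (w : seq bool) : bool :=
  [&& lyndon w, size w == l & count id w == k].

Definition wpow {T : Type} (q : nat) (x : seq T) : seq T := flatten (nseq q x).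

Definition inL2q (q l k : nat) (w : seq bool) : Prop :=
  exists2 x, inL2 (l %/ q) (k %/ q) x & w = wpow q x.

Definition inQ (l k om q : nat) : bool :=
  [&& 0 < q, q %| gcdn l k & coprime q om].

Section Circulant.
Variables (n a b : nat).

Definition bond (e : nat * nat) : bool :=
  (e.1 < n) && ((e.2 == (e.1 + a) %% n) || (e.2 == (e.1 + b) %% n)).

Definition is_bstep (e : nat * nat) : bool := e.2 == (e.1 + b) %% n.

Definition b_count (c : seq (nat * nat)) : nat := count is_bstep c.

Definition is_path (c : seq (nat * nat)) : bool :=
  all bond c &&
  match c with
  | [::] => true
  | e :: c' => path (fun e f => e.2 == f.1) e c'
  end.

Definition is_circuit (c : seq (nat * nat)) : bool :=
  is_path c &&
  match c with
  | [::] => false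
  | e :: c' => (last e c').2 == e.1
  end.

Definition same_orbit (c c' : seq (nat * nat)) : Prop :=
  exists i, c' = rot i c.

Definition primitive_orbit (c : seq (nat * nat)) : Prop :=
  ~ exists c0 r, 1 < r /\ is_circuit c0 /\ same_orbit (wpow r c0) c.

Definition in_P (l k : nat) (c : seq (nat * nat)) : Prop :=
  [/\ is_circuit c, primitive_orbit c, size c = l & b_count c = k].

Fixpoint psi (w : seq bool) (v : nat) : seq (nat * nat) :=
  match w with
  | [::] => [::]
  | x :: w' => let u := (v + (if x then b else a)) %% n in (v, u) :: psi w' u
  end.

End Circulant.

(* Main.v *)
Require Import Defs.
From mathcomp Require Import all_boot.
From mathcomp Require Import zify.
Set Implicit Arguments. Unset Strict Implicit. Unset Printing Implicit Defensive.

Lemma lexlt_irr s : lexlt s s = false.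
Proof. elim: s => //= x s ->; by case: x. Qed.

Lemma lexlt_trans s t u : lexlt s t -> lexlt t u -> lexlt s u.
Proof.
elim: s t u => [|x s IH] [|y t] [|z u] //=.
by case: x; case: y; case: z => //=; apply: IH.
Qed.

Lemma lexlt_total s t : size s = size t -> s != t -> lexlt s t || lexlt t s.
Proof.
elim: s t => [|x s IH] [|y t] //= [] Hs.
rewrite eqseq_cons negb_and; case: x; case: y => //= H; apply: IH => //.
Qed.

Lemma lexlt_cat y z A B : size y = size z -> lexlt (y ++ A) (z ++ B) -> lexlt y z || (y == z).
Proof.
elim: y z => [|x y IH] [|w z] //= [] Hs.
rewrite eqseq_cons; case: x; case: w => //= H; exact: IH.
Qed.

Lemma wposS {T} q (x : seq T) : wpow q.+1 x = x ++ wpow q x.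
Proof. by []. Qed.

Lemma wpow_add {T} p q (x : seq T) : wpow (p + q) x = wpow p x ++ wpow q x.
Proof. elim: p => //= p IH. by rewrite /wpow /= -catA; congr (_ ++ _). Qed.

Lemma wpowSr {T} q (x : seq T) : wpow q.+1 x = wpow q x ++ x.
Proof. by rewrite -addn1 wpow_add /wpow /= cats0. Qed.

Lemma size_wpow {T} q (x : seq T) : size (wpow q x) = q * size x.
Proof. elim: q => // q IH. by rewrite wposS size_cat IH mulSn. Qed.

Lemma count_wpow {T} (P : pred T) q (x : seq T) : count P (wpow q x) = q * count P x.
Proof. elim: q => // q IH. by rewrite wposS count_cat IH mulSn. Qed.

Lemma wpow_mul {T} g h (x : seq T) : wpow g (wpow h x) = wpow (g * h) x.
Proof. elim: g => // g IH. by rewrite wposS IH mulSn wpow_add. Qed.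

Lemma map_wpow {T U} (f : T -> U) q x : map f (wpow q x) = wpow q (map f x).
Proof. elim: q => // q IH. by rewrite !wposS map_cat IH. Qed.

Lemma rot_wpow {T} i q (x : seq T) : i <= size x -> rot i (wpow q x) = wpow q (rot i x).
Proof.
move=> Hi; case: q => [|q] //.
rewrite -(cat_take_drop i x).
set T1 := take i x; set D := drop i x.
have HT : size T1 = i by rewrite size_take; case: ltngtP Hi => // ->.
have key : forall m, D ++ wpow m (T1 ++ D) ++ T1 = wpow m.+1 (D ++ T1).
  elim=> [|m IH]; first by rewrite /wpow /= cats0.
  by rewrite wposS -!catA IH [RHS]wposS -catA.
rewrite wposS /rot -catA drop_size_cat // take_size_cat //.
idtac.
by rewrite drop_size_cat // take_size_cat // -catA key.
Qed.

Lemma rot_sub {T} (s : seq T) m p : p <= m -> m <= size s -> rot m s = s -> rot p s = s -> rot (m - p) s = s.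
Proof.
move=> Hpm Hm Hr Hp. rewrite -{1}Hp -rotD; last by rewrite subnK.
by rewrite subnK.
Qed.

Lemma rot_gcd {T} (s : seq T) m p : m <= size s -> p <= size s -> rot m s = s -> rot p s = s -> rot (gcdn m p) s = s.
Proof.
move: {2}(m + p) (leqnn (m + p)) => N.
elim: N m p => [|N IH] m p HN Hm Hp Hrm Hrp.
  have -> : m = 0 by lia. by rewrite gcd0n.
case: m HN Hm Hrm => [|m] HN Hm Hrm; first by rewrite gcd0n.
case: p HN Hp Hrp => [|p] HN Hp Hrp; first by rewrite gcdn0.
case: (leqP m.+1 p.+1) => H.
- have -> : gcdn m.+1 p.+1 = gcdn m.+1 (p.+1 - m.+1) by rewrite -{1}(subnK H) gcdnDr.
  apply: (IH m.+1 (p.+1 - m.+1)) => //; [lia|lia|exact: (rot_sub H Hp Hrp Hrm)].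
- have -> : gcdn m.+1 p.+1 = gcdn (m.+1 - p.+1) p.+1.
    by rewrite gcdnC -{1}(subnK (ltnW H)) gcdnDr gcdnC.
  apply: (IH (m.+1 - p.+1) p.+1) => //; [lia|lia|exact: (rot_sub (ltnW H) Hm Hrm Hrp)].
Qed.

Lemma comm_pow {T : eqType} (y : seq T) q D : size D = q * size y -> D ++ y = y ++ D -> D = wpow q y.
Proof.
elim: q D => [|q IH] D HD Hc; first by case: D HD Hc.
have Hle : size y <= size D by rewrite HD mulSn leq_addr.
have Ht : take (size y) D = y.
  by rewrite -(takel_cat y Hle) Hc take_size_cat.
have [D' HDe] : exists D', D = y ++ D'.
  by exists (drop (size y) D); rewrite -{1}(cat_take_drop (size y) D) Ht.
subst D; rewrite wposS; congr (_ ++ _).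
apply: IH.
  by move: HD; rewrite size_cat mulSn => /eqP; rewrite eqn_add2l => /eqP.
move: Hc; rewrite -!catA => /eqP.
by rewrite eqseq_cat // => /andP[_ /eqP].
Qed.

Lemma rot_period_pow {T : eqType} (t : seq T) p : 0 < p -> p %| size t -> rot p t = t ->
  t = wpow (size t %/ p) (take p t).
Proof.
move=> Hp Hd Hr.
case: (posnP (size t)) => Ht0.
  by case: t Ht0 Hd Hr => // *; rewrite div0n.
have Hle : p <= size t by apply: dvdn_leq.
have [y [D [Hy Ht]]] : exists y D, size y = p /\ t = y ++ D.
  exists (take p t), (drop p t); rewrite cat_take_drop; split => //.
  by rewrite size_take; case: ltngtP Hle => // ->.
subst t; rewrite take_size_cat //.
move: Hr; rewrite -Hy rot_size_cat => Hc.
move: Hd; rewrite size_cat Hy dvdn_addr // => /dvdnP [r Hr].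
have -> : (p + size D) %/ p = r.+1 by rewrite Hr -mulSn mulnK.
rewrite wposS; congr (_ ++ _); apply: comm_pow => //.
by rewrite Hr Hy.
Qed.

Lemma wpow_inj {T : eqType} q (z x : seq T) : 0 < q -> size z = size x -> wpow q z = wpow q x -> z = x.
Proof.
case: q => // q _ Hs /eqP; rewrite !wposS eqseq_cat // => /andP[/eqP -> _] //.
Qed.

Lemma min_rot (s : seq bool) : 0 < size s ->
  exists2 j, j < size s & forall i, i < size s -> ~~ lexlt (rot i s) (rot j s).
Proof.
move=> Hs.
suff : forall N, N <= size s -> exists2 j, j < size s & forall i, i < N -> ~~ lexlt (rot i s) (rot j s).
  by move/(_ (size s) (leqnn _)).
elim=> [|N IH] HN; first by exists 0.
have [j Hj Hmin] := IH (ltnW HN).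
case H: (lexlt (rot N s) (rot j s)).
- exists N => // i; rewrite ltnS leq_eqVlt => /orP[/eqP -> | Hi]; first by rewrite lexlt_irr.
  apply/negP => Hl; move: (Hmin i Hi); by rewrite (lexlt_trans Hl H).
- exists j => // i; rewrite ltnS leq_eqVlt => /orP[/eqP -> | Hi]; first by rewrite H.
  exact: Hmin.
Qed.

Lemma lyndon_root (s : seq bool) : 0 < size s ->
  exists j y q, [/\ j < size s, lyndon y, 0 < q & rot j s = wpow q y].
Proof.
move=> Hs.
have [j0 Hj0 Hmin] := min_rot Hs.
set L := size s in Hs Hj0 Hmin.
set t := rot j0 s.
have HtL : size t = L by rewrite size_rot.
have key : forall i, i < L -> ~~ lexlt (rot i t) t.
  move=> i Hi.
  have -> : rot i t = rot ((i + j0) %% L) s.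
    rewrite /t rot_add_mod; try (rewrite -/L; lia).
    rewrite -/L; case: (ltngtP (i + j0) L) => H.
    + by rewrite modn_small.
    + have -> : i + j0 - L = (i + j0) %% L.
        rewrite -{2}(subnK (ltnW H)) modnDr modn_small //; lia.
      by [].
    + by rewrite H modnn rot_size rot0.
  apply: Hmin; by rewrite ltn_mod.
pose P p := [&& 0 < p, p <= L & rot p t == t].
have exP : exists p, P p by exists L; rewrite /P Hs leqnn -HtL rot_size eqxx.
case: (ex_minnP exP) => p /and3P[Hp HpL /eqP Hrp] Hpmin.
have Hg : rot (gcdn p L) t = t.
  apply: rot_gcd; rewrite ?HtL //; by rewrite -HtL rot_size.
have HgP : P (gcdn p L).
  rewrite /P Hg eqxx gcdn_gt0 Hp /= andbT; apply: dvdn_leq => //; exact: dvdn_gcdr.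
have Hgp : gcdn p L = p.
  apply/eqP; rewrite eqn_leq (Hpmin _ HgP) andbT; apply: dvdn_leq => //; exact: dvdn_gcdl.
have HpdL : p %| L by rewrite -Hgp dvdn_gcdr.
have Htw := rot_period_pow Hp (etrans (f_equal _ HtL) _) Hrp.
rewrite HtL in Htw; move: (Htw HpdL) => {}Htw.
have Hy : size (take p t) = p by rewrite size_take HtL; case: ltngtP HpL => // ->.
have Hq : 0 < L %/ p by rewrite divn_gt0.
exists j0, (take p t), (L %/ p); split => //.
apply/forallP => [[i Hi']] /=; apply/implyP => Hi0.
have Hi : i < p by rewrite -Hy.
clear Hi'.
have HiL : i <= L by apply: (leq_trans (ltnW Hi)).
have Hne : rot i t != t.
  apply/negP => /eqP Hr.
  have : P i by rewrite /P Hi0 HiL Hr eqxx.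
  move/Hpmin; by rewrite leqNgt Hi.
have Hrw : rot i t = wpow (L %/ p) (rot i (take p t)).
  by rewrite {1}Htw rot_wpow // Hy ltnW.
have Hsz : size (wpow (L %/ p) (take p t)) = size (wpow (L %/ p) (rot i (take p t))).
  by rewrite !size_wpow size_rot.
move: (lexlt_total Hsz); rewrite -Htw -Hrw eq_sym Hne => /(_ isT).
rewrite (negbTE (key i (leq_trans Hi HpL))) orbF.
rewrite Hrw {1}Htw.
case: (L %/ p) Hq => // q _; rewrite !wposS => /lexlt_cat.
rewrite size_rot => /(_ erefl) /orP[//|/eqP He].
by move: Hne; rewrite Hrw {2}Htw -He eqxx.
Qed.

Section G.
Variables (n a b : nat).
Hypotheses (Hn : 0 < n) (Hab : a < b) (Hbn : b < n).

Definition st (x : bool) := if x then b else a.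
Fixpoint endv (w : seq bool) v := match w with [::] => v | x :: w' => endv w' ((v + st x) %% n) end.
Definition stsum (w : seq bool) := foldr (fun x s => st x + s) 0 w.

Lemma endv_cat w1 w2 v : endv (w1 ++ w2) v = endv w2 (endv w1 v).
Proof. by elim: w1 v => //= x w IH v. Qed.

Lemma endv_mod w v : endv w (v %% n) = (v + stsum w) %% n.
Proof.
elim: w v => [|x w IH] v /=; first by rewrite addn0.
by rewrite modnDml IH addnA.
Qed.

Lemma endv_lt w v : v < n -> endv w v < n.
Proof. move=> Hv; rewrite -(modn_small Hv) endv_mod; exact: ltn_pmod. Qed.

Lemma endv_small w v : v < n -> endv w v = (v + stsum w) %% n.
Proof. move=> Hv; by rewrite -endv_mod modn_small. Qed.

Lemma stsum_cat w1 w2 : stsum (w1 ++ w2) = stsum w1 + stsum w2.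
Proof. elim: w1 => //= x w ->; by rewrite addnA. Qed.

Lemma stsum_wpow q w : stsum (wpow q w) = q * stsum w.
Proof. elim: q => // q IH; by rewrite wposS stsum_cat IH mulSn. Qed.

Lemma stsum_count w : stsum w = size w * a + count id w * (b - a).
Proof. elim: w => //= x w ->; rewrite /st; case: x => /=; lia. Qed.

Lemma psi_cat w1 w2 v : psi n a b (w1 ++ w2) v = psi n a b w1 v ++ psi n a b w2 (endv w1 v).
Proof. by elim: w1 v => //= x w IH v; rewrite IH. Qed.

Lemma size_psi w v : size (psi n a b w v) = size w.
Proof. by elim: w v => //= x w IH v; rewrite IH. Qed.

Lemma isb_psi w v : map (is_bstep n b) (psi n a b w v) = w.
Proof.
elim: w v => //= x w IH v; rewrite IH; congr (_ :: _).
rewrite /is_bstep /=; case: x => /=; first by rewrite eqxx.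
apply/negbTE; rewrite eqn_modDl !modn_small //; last exact: ltn_trans Hbn.
by rewrite neq_ltn Hab.
Qed.

Lemma bcount_psi w v : b_count n b (psi n a b w v) = count id w.
Proof. by rewrite /b_count -{2}(isb_psi w v) count_map. Qed.

Lemma all_bond_psi w v : v < n -> all (bond n a b) (psi n a b w v).
Proof.
elim: w v => //= x w IH v Hv; rewrite IH ?ltn_pmod // andbT /bond /= Hv.
by case: x; rewrite eqxx ?orbT.
Qed.

Lemma path_psi w e u : e.2 = u -> path (fun e f => e.2 == f.1) e (psi n a b w u).
Proof.
elim: w e u => //= x w IH e u He; rewrite He eqxx /=; exact: IH.
Qed.

Lemma last_psi w e u : e.2 = u -> (last e (psi n a b w u)).2 = endv w u.
Proof. elim: w e u => //= x w IH e u He; exact: IH. Qed.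

Lemma circuit_psi w v : v < n -> 0 < size w -> endv w v = v -> is_circuit n a b (psi n a b w v).
Proof.
case: w => // x w Hv _ He.
rewrite /is_circuit /is_path all_bond_psi //= path_psi //=.
by rewrite (@last_psi w (v, _) _ erefl); apply/eqP; exact: He.
Qed.

Lemma bond_psi e : bond n a b e -> e = (e.1, (e.1 + st (is_bstep n b e)) %% n).
Proof.
case: e => u w /andP[/= Hu /orP[/eqP->|/eqP->]]; rewrite /is_bstep /st /=.
- case: ifP => // /eqP <-; done.
- by rewrite eqxx.
Qed.

Lemma bond_psi2 e : bond n a b e -> e.2 = (e.1 + st (is_bstep n b e)) %% n.
Proof. by move/bond_psi => {1}->. Qed.

Lemma psi_inv c e : all (bond n a b) (e :: c) -> path (fun e f => e.2 == f.1) e c ->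
  e :: c = psi n a b (map (is_bstep n b) (e :: c)) e.1.
Proof.
elim: c e => [|f c IH] e /=.
  by rewrite andbT => He _; rewrite {1}(bond_psi He).
case/and3P => He Hf Hc /andP[/eqP Hef Hp].
rewrite {1}(bond_psi He) /=; congr (_ :: _).
change (f :: c = psi n a b (map (is_bstep n b) (f :: c)) ((e.1 + st (is_bstep n b e)) %% n)).
rewrite -(bond_psi2 He) Hef; apply: IH => //; by rewrite /= Hf.
Qed.

Lemma circuit_inv c : is_circuit n a b c -> exists e c',
  [/\ c = e :: c', c = psi n a b (map (is_bstep n b) c) e.1,
      endv (map (is_bstep n b) c) e.1 = e.1 & e.1 < n].
Proof.
case: c => // e c /andP[/andP[Hb Hp] /eqP Hl].
have Hc := psi_inv Hb Hp.
exists e, c; split => //; last by case/andP: Hb => /andP[].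
have He : bond n a b e by case/andP: Hb.
move: Hc => /= [_ Hc'].
change (endv (map (is_bstep n b) c) ((e.1 + st (is_bstep n b e)) %% n) = e.1).
by rewrite -(@last_psi (map (is_bstep n b) c) e _ (bond_psi2 He)) -Hc' Hl.
Qed.

Lemma rot_psi w v j : endv w v = v -> j <= size w ->
  rot j (psi n a b w v) = psi n a b (rot j w) (endv (take j w) v).
Proof.
move=> He Hj.
rewrite -{1}(cat_take_drop j w) psi_cat /rot.
have Hs : size (psi n a b (take j w) v) = j by rewrite size_psi size_take; case: ltngtP Hj => // ->.
rewrite drop_size_cat // take_size_cat // psi_cat; congr (_ ++ _).
by rewrite -endv_cat cat_take_drop He.
Qed.

Lemma wpow_psi g w v : endv w v = v -> wpow g (psi n a b w v) = psi n a b (wpow g w) v.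
Proof.
move=> He; elim: g => // g IH.
by rewrite !wposS psi_cat He IH.
Qed.

End G.

Lemma count_rot' {T} (P : pred T) j (s : seq T) : count P (rot j s) = count P s.
Proof. by rewrite /rot count_cat addnC -count_cat cat_take_drop. Qed.

Lemma psi_head n a b w u v : psi n a b w u = psi n a b w v -> 0 < size w -> u = v.
Proof. by case: w => //= x w [-> _]. Qed.

Lemma rot_wpow_self {T} r (c0 : seq T) : 0 < r -> rot (size c0) (wpow r c0) = wpow r c0.
Proof. case: r => // r _; by rewrite wposS rot_size_cat -wpowSr. Qed.

Unset Implicit Arguments.
Theorem mainTheorem14 (n a b l k om : nat)
  (hn : 2 <= n) (ha : 0 < a) (hab : a < b) (hbn : b < n)
  (hgcd : gcdn (gcdn n a) b = 1)
  (hl : 1 <= l) (hkl : k <= l) (hom : 0 < om)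
  (heq : l * a + k * (b - a) = om * n) :
  (forall q w v, inQ l k om q -> inL2q q l k w -> v < n ->
     is_circuit n a b (psi n a b w v) /\ in_P n a b l k (psi n a b w v))
  /\
  (forall c, in_P n a b l k c ->
     exists q w v, [/\ inQ l k om q, inL2q q l k w, v < n &
                      same_orbit (psi n a b w v) c]).
Proof.
have Hn : 0 < n by apply: leq_trans hn.
have HS : forall w, size w = l -> count id w = k -> stsum a b w = om * n.
  by move=> w Hs Hc; rewrite (stsum_count Hn hab hbn) Hs Hc.
have Hmodv : forall u t, u < n -> (u + t * n) %% n = u.
  by move=> u t Hu; rewrite addnC modnMDl modn_small.
split.
- move=> q w0 v /and3P[Hq Hql Hco] [x /and3P[Hly /eqP Hsx /eqP Hcx] ->] Hv.
  move: Hql; rewrite dvdn_gcd => /andP[Hql Hqk].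
  set w := wpow q x.
  have Hsw : size w = l by rewrite size_wpow Hsx mulnC divnK.
  have Hcw : count id w = k by rewrite count_wpow Hcx mulnC divnK.
  have Hend : endv n a b w v = v by rewrite endv_small // HS // Hmodv.
  have Hw0 : 0 < size w by rewrite Hsw.
  have Hcirc := circuit_psi Hn Hv Hw0 Hend.
  split => //; split => //; last first.
  + by rewrite (bcount_psi hab hbn).
  + by rewrite size_psi.
  move=> [c0 [r [Hr [Hc0 [i Hi]]]]].
  set c := psi n a b w v in Hi Hcirc.
  set m := size c0.
  have Hm0 : 0 < m by move: Hc0; rewrite /m; case: (c0).
  have Hlrm : l = r * m by rewrite -Hsw -(size_psi n a b w v) -/c Hi size_rot size_wpow.
  have Hml : m < l by rewrite Hlrm -{1}(mul1n m) ltn_pmul2r.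
  have Hrot : rot m c = c by rewrite Hi rot_rot rot_wpow_self // ltnW.
  have Hrw : rot m w = w by rewrite -{2}(isb_psi hab hbn w v) -/c -Hrot map_rot (isb_psi hab hbn).
  have Hhead : endv n a b (take m w) v = v.
    move: Hrot; rewrite /c (rot_psi Hend) ?Hsw ?(ltnW Hml) // Hrw => /psi_head; exact.
  set p := size x.
  have Hp0 : 0 < p by move: Hw0; rewrite /w size_wpow muln_gt0 => /andP[].
  have Hq0 : q = q.-1.+1 by rewrite prednK.
  have Hrp : rot p w = w by rewrite /w Hq0 wposS rot_size_cat -wpowSr.
  have HpL : p <= l by rewrite -Hsw /w size_wpow -/p leq_pmull.
  set d := gcdn m p.
  have Hrd : rot d w = w by apply: rot_gcd; rewrite ?Hsw // ltnW.
  have Hdp : d <= p by apply: dvdn_leq => //; exact: dvdn_gcdr.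
  have Hd0 : 0 < d by rewrite gcdn_gt0 Hm0.
  have Hdeq : d = p.
    apply/eqP; rewrite eqn_leq Hdp /=; rewrite leqNgt; apply/negP => Hlt.
    have Hrx : rot d x = x.
      apply: (wpow_inj Hq); first by rewrite size_rot.
      by rewrite -rot_wpow.
    move/forallP: Hly => /(_ (Ordinal Hlt)) /implyP /(_ Hd0) /=.
    by rewrite Hrx lexlt_irr.
  have Hpm : p %| m by rewrite -Hdeq dvdn_gcdl.
  case/dvdnP: Hpm => t Ht.
  have Hlqp : l = q * p by rewrite -Hsw /w size_wpow.
  have Htq : t < q by rewrite -(ltn_pmul2r Hp0) -Ht -Hlqp.
  have Htake : take m w = wpow t x.
    rewrite /w -(subnK (ltnW Htq)) addnC wpow_add take_size_cat //.
    by rewrite size_wpow Ht.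
  rewrite Htake (endv_small _ _ _ Hv) stsum_wpow in Hhead.
  set S := stsum a b x in Hhead.
  have HqS : q * S = om * n by rewrite -stsum_wpow -/w HS.
  have H0 : t * S %% n = 0.
    have : (v + t * S) %% n == (v + 0) %% n by rewrite addn0 Hhead modn_small.
    by rewrite eqn_modDl mod0n => /eqP.
  have H0d : n %| t * S by rewrite /dvdn H0.
  case/dvdnP: H0d => z Hz.
  have Hqz : q * z = t * om.
    apply/eqP; rewrite -(eqn_pmul2r Hn) -mulnA -Hz mulnCA HqS; lia.
  have : q %| t by rewrite -(Gauss_dvdl _ Hco) -Hqz dvdn_mulr.
  have Ht0 : 0 < t by move: Hm0; rewrite Ht muln_gt0 => /andP[].
  move/(dvdn_leq Ht0); by rewrite leqNgt Htq.
- move=> c [Hcirc Hprim Hsc Hbc].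
  have [e [c' [Ec Hpsi Hend He1]]] := circuit_inv Hcirc.
  set s := map (is_bstep n b) c in Hpsi Hend.
  have Hss : size s = l by rewrite size_map.
  have Hcs : count id s = k by rewrite count_map.
  have Hs0 : 0 < size s by rewrite Hss.
  have [j [y [q [Hj Hly Hq Hrj]]]] := lyndon_root Hs0.
  set u := endv n a b (take j s) e.1.
  have Hu : u < n by exact: (endv_lt a b Hn _ He1).
  have Hrc : rot j c = psi n a b (wpow q y) u.
    by rewrite {1}Hpsi (rot_psi Hend (ltnW Hj)) Hrj.
  have Hc : c = rot (l - j) (psi n a b (wpow q y) u).
    by rewrite -Hrc -{1}(rotK j c) /rotr size_rot Hsc.
  have Hsq : q * size y = l by rewrite -size_wpow -Hrj size_rot.
  have Hcq : q * count id y = k by rewrite -count_wpow -Hrj count_rot'.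
  have Hql : q %| l by rewrite -Hsq dvdn_mulr.
  have Hqk : q %| k by rewrite -Hcq dvdn_mulr.
  have Hco : coprime q om.
    rewrite /coprime; case E: (gcdn q om == 1) => //.
    exfalso; apply: Hprim.
    set g := gcdn q om in E.
    have Hg0 : 0 < g by rewrite gcdn_gt0 Hq.
    have Hg1 : 1 < g by move: E Hg0; case: (g) => [|[|g']].
    have Hgq : g %| q by apply: dvdn_gcdl.
    have Hgom : g %| om by apply: dvdn_gcdr.
    set h := q %/ g.
    have Hqh : q = h * g by rewrite divnK.
    have Hh0 : 0 < h by rewrite divn_gt0 // dvdn_leq.
    have Hy0 : 0 < size y by move: hl; rewrite -Hsq muln_gt0 => /andP[].
    set S := stsum a b y.
    have HqS : q * S = om * n.
      rewrite -stsum_wpow HS //; first by rewrite size_wpow.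
      by rewrite count_wpow.
    have HhS : h * S = om %/ g * n.
      apply/eqP; rewrite -(eqn_pmul2r Hg0) mulnAC -Hqh HqS mulnAC divnK //.
    have Hend0 : endv n a b (wpow h y) u = u.
      by rewrite (endv_small _ _ _ Hu) stsum_wpow HhS Hmodv.
    exists (psi n a b (wpow h y) u), g; split => //; split.
      have Hw0 : 0 < size (wpow h y) by rewrite size_wpow muln_gt0 Hh0.
      exact: (circuit_psi Hn Hu Hw0 Hend0).
    exists (l - j); rewrite (wpow_psi g Hend0) wpow_mul mulnC -Hqh.
    exact: Hc.
  exists q, (wpow q y), u; split => //.
  + by rewrite /inQ Hq dvdn_gcd Hql Hqk.
  + exists y => //; by rewrite /inL2 Hly -Hsq -Hcq !mulKn // !eqxx.
  + by exists (l - j).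
Qed.
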